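(* The product of $\mathbf{PM}_k$ satisfies, for any $k$-packed matrices $M_1$ and $M_2$, $\mathbf{E}_{M_1} \cdot \mathbf{E}_{M_2} = \mathbf{E}_{\mathrm{ov}(M_1, M_2)}$ and $\mathbf{H}_{M_1} \cdot \mathbf{H}_{M_2} = \mathbf{H}_{\mathrm{un}(M_1, M_2)}$.
   Context: Let $k \geq 1$, $A_k := \{0,1,\dots,k\}$. A $k$-packed matrix of size $n$ is an $n\times n$ matrix with entries in $A_k$ with at least one nonzero entry in each row and column. $\mathbf{PM}_k$ has fundamental basis $(\mathbf{F}_M)$ indexed by $k$-packed matrices and product $\mathbf{F}_{M_1}\cdot\mathbf{F}_{M_2} = \sum_{M \in \mathrm{Sh}_c(M_1,M_2)} \mathbf{F}_M$, where, for sizes $n_1, n_2$, $\mathrm{Sh}_c(M_1,M_2)$ is the set of all matrices obtained by shuffling the columns of $M_1$ with an $n_2 \times n_1$ zero block placed below it, with the columns of $M_2$ with an $n_1 \times n_2$ zero block placed above it. $\mathrm{ov}(M_1,M_2) := \begin{pmatrix} M_1 & 0 \\ 0 & M_2\end{pmatrix}$ and $\mathrm{un}(M_1,M_2) := \begin{pmatrix} 0 & M_1 \\ M_2 & 0 \end{pmatrix}$. Define $\to$ on $k$-packed matrices of size $n$: $M_1 \to M_2$ if there is $i \in [n-1]$ such that, with $s$ the number of $0$ ending the $i$th column of $M_1$ and $p$ the number of $0$ starting its $(i+1)$st column, $s + p \geq n$ and $M_2$ is obtained by exchanging columns $i$ and $i+1$ of $M_1$. $\leq_{\mathrm{M}}$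 is the reflexive and transitive closure of $\to$. The elementary and homogeneous elements are $\mathbf{E}_M := \sum_{M \leq_{\mathrm{M}} M'} \mathbf{F}_{M'}$ and $\mathbf{H}_M := \sum_{M' \leq_{\mathrm{M}} M} \mathbf{F}_{M'}$. *)

(* Defs.v *)
From mathcomp Require Import all_boot all_order all_algebra.
Set Implicit Arguments. Unset Strict Implicit. Unset Printing Implicit Defensive.

(* A matrix with entries in A_k = {0,...,k} is a matrix over 'I_k.+1.
   A (possibly not packed) square matrix of any size: a dependent pair. *)
Definition pmat (k : nat) := {n : nat & 'M['I_k.+1]_n}.

Definition psize k (M : pmat k) : nat := tag M.

Definition packedb k n (M : 'M['I_k.+1]_n) : bool :=
  [forall i, exists j, M i j != ord0] && [forall j, exists i, M i j != ord0].

Definition packed k (M : pmat k) : bool := packedb (tagged M).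

(* entry access with nat indices, default 0 out of range *)
Definition mget k n (A : 'M['I_k.+1]_n) (i j : nat) : 'I_k.+1 :=
  match (insub i : option 'I_n), (insub j : option 'I_n) with
  | Some i', Some j' => A i' j'
  | _, _ => ord0
  end.

(* The shuffle of the columns of (M1 over a zero block) with the columns of
   (a zero block over M2), where S is the set of positions receiving the
   columns of M1 (in order). *)
Definition shuffle_mx k n1 n2 (S : {set 'I_(n1 + n2)})
  (M1 : 'M['I_k.+1]_n1) (M2 : 'M['I_k.+1]_n2) : 'M['I_k.+1]_(n1 + n2) :=
  \matrix_(i, j)
    if j \in S then
      (if (i : nat) < n1 then mget M1 i #|[set l in S | (l : nat) < j]| else ord0)
    else
      (if n1 <= i then mget M2 (i - n1) #|[set l in ~: S | (l : nat) < j]| else ord0).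

Definition shc k (M1 M2 : pmat k) : seq (pmat k) :=
  [seq Tagged (fun n => 'M['I_k.+1]_n) (shuffle_mx X (tagged M1) (tagged M2))
  | X <- enum [set X : {set 'I_(psize M1 + psize M2)} | #|X| == psize M1]].

(* Elements of PM_k with nonnegative integer coefficients in the
   fundamental basis (F_M) are represented by multisets (seqs) of
   matrices: the seq s stands for \sum_(M <- s) F_M.  Two such elements are
   equal iff the seqs are permutations of each other (perm_eq). *)
Definition pm_mul k (x y : seq (pmat k)) : seq (pmat k) :=
  flatten (allpairs (@shc k) x y).

Definition ov k (M1 M2 : pmat k) : pmat k :=
  Tagged (fun n => 'M['I_k.+1]_n)
    (block_mx (tagged M1) (const_mx ord0 : 'M_(psize M1, psize M2))
              (const_mx ord0 : 'M_(psize M2, psize M1)) (tagged M2)).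

Definition un k (M1 M2 : pmat k) : pmat k :=
  Tagged (fun n => 'M['I_k.+1]_n)
    (castmx (erefl, addnC (psize M2) (psize M1))
      (block_mx (const_mx ord0 : 'M_(psize M1, psize M2)) (tagged M1)
                (tagged M2) (const_mx ord0 : 'M_(psize M2, psize M1)))).

Definition trail0 k n (M : 'M['I_k.+1]_n) (j : 'I_n) : nat :=
  #|[set r : 'I_n | [forall r' : 'I_n, (r <= r') ==> (M r' j == ord0)]]|.

Definition lead0 k n (M : 'M['I_k.+1]_n) (j : 'I_n) : nat :=
  #|[set r : 'I_n | [forall r' : 'I_n, (r' <= r) ==> (M r' j == ord0)]]|.

(* the relation M1 -> M2 (columns indexed from 0: i and i+1) *)
Definition mstep k n : rel 'M['I_k.+1]_n := fun M1 M2 =>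
  [exists i : 'I_n, exists j : 'I_n,
     [&& (j : nat) == i.+1, n <= trail0 M1 i + lead0 M1 j & M2 == xcol i j M1]].

Definition leM k n (M1 M2 : 'M['I_k.+1]_n) : bool := connect (@mstep k n) M1 M2.

Definition Eel k (M : pmat k) : seq (pmat k) :=
  [seq Tagged (fun n => 'M['I_k.+1]_n) M' | M' <- enum 'M['I_k.+1]_(psize M)
  & leM (tagged M) M'].

Definition Hel k (M : pmat k) : seq (pmat k) :=
  [seq Tagged (fun n => 'M['I_k.+1]_n) M' | M' <- enum 'M['I_k.+1]_(psize M)
  & leM M' (tagged M)].

(* Main.v *)
Require Import Defs.
From mathcomp Require Import all_boot all_order all_algebra perm zify.
Set Implicit Arguments. Unset Strict Implicit. Unset Printing Implicit Defensive.


Section Basics.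
Variable k : nat.
Notation Mx n := 'M['I_k.+1]_n.

Definition star n (M : Mx n) (i j : 'I_n) :=
  forall r r' : 'I_n, M r i != ord0 -> M r' j != ord0 -> r < r'.

Lemma star_iff n (M : Mx n) i j : n <= trail0 M i + lead0 M j <-> star M i j.
Proof.
rewrite /trail0 /lead0.
set U := [set r : 'I_n | _]; set L := [set r : 'I_n | _].
split.
- move=> H r r' Hr Hr'; rewrite ltnNge; apply/negP => Hle.
  have UL : U :&: L = set0.
    apply/setP => x; rewrite !inE; apply/negP => /andP[/forallP/(_ r) Hu /forallP/(_ r') Hl].
    case: (leqP x r) => Hxr.
      by move: Hu; rewrite Hxr /= (negbTE Hr).
    move: Hl; rewrite (leq_trans Hle (ltnW Hxr)) /=.
    by rewrite (negbTE Hr').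
  have Hsub : U :|: L \subset [set~ r].
    apply/subsetP => x; rewrite !inE => /orP[] /forallP Hx; apply/eqP => Exr; subst x.
      by move: (Hx r); rewrite leqnn (negbTE Hr).
    by move: (Hx r'); rewrite Hle (negbTE Hr').
  move: (subset_leq_card Hsub); rewrite cardsC1 card_ord.
  rewrite cardsU.
  rewrite UL.
  rewrite cards0 subn0 => H2; move: (leq_trans H H2).
  have := ltn_ord r; lia.
- move=> S.
  have Hcov : U :|: L = setT.
    apply/setP => x; rewrite !inE; apply/orP.
    case: (boolP [forall r' : 'I_n, (r' <= x) ==> (M r' j == ord0)]) => Hl; first by right.
    left; apply/forallP => r; apply/implyP => Hxr; apply/negPn/negP => Hr.
    move/forallPn: Hl => [r']; rewrite negb_imply => /andP[Hr'x Hr'].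
    have := S r r' Hr Hr'; rewrite ltnNge; move/negP; apply.
    exact: leq_trans Hr'x Hxr.
  have := leq_card_setU U L; rewrite Hcov cardsT card_ord.
  by case.
Qed.
End Basics.


Definition rkn n (S : {set 'I_n}) (m : nat) := #|[set l in S | (l:nat) < m]|.

Section Rk.
Variable n : nat.
Implicit Types S : {set 'I_n}.

Lemma rkn0 S : rkn S 0 = 0.
Proof. apply/eqP; rewrite cards_eq0; apply/eqP/setP => x; rewrite !inE ltn0 andbF. done. Qed.

Lemma rknS S (o : 'I_n) : rkn S o.+1 = rkn S o + (o \in S).
Proof.
rewrite /rkn; case: (boolP (o \in S)) => Ho.
  have -> : [set l in S | (l:nat) < o.+1] = o |: [set l in S | (l:nat) < o].
    apply/setP => x; rewrite !inE ltnS leq_eqVlt; case: (eqVneq x o) => [->|Hx] /=.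
      by rewrite Ho eqxx.
    by move: Hx; rewrite -val_eqE /= => /negbTE ->.
  by rewrite cardsU1 !inE ltnn andbF addnC.
have -> : [set l in S | (l:nat) < o.+1] = [set l in S | (l:nat) < o].
  apply/setP => x; rewrite !inE ltnS leq_eqVlt; case: (eqVneq x o) => [->|Hx] /=.
    by rewrite (negbTE Ho).
  by move: Hx; rewrite -val_eqE /= => /negbTE ->.
by rewrite addn0.
Qed.

Lemma rkn_mono S m m' : m <= m' -> rkn S m <= rkn S m'.
Proof.
move=> H; apply: subset_leq_card; apply/subsetP => x; rewrite !inE => /andP[-> /leq_trans]; exact.
Qed.

Lemma rkn_full S : rkn S n = #|S|.
Proof. by rewrite /rkn (_ : [set l in S | _] = S) //; apply/setP => x; rewrite !inE ltn_ord andbT. Qed.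

Lemma rkn_lt S (o : 'I_n) : o \in S -> rkn S o < #|S|.
Proof.
move=> Ho; rewrite -rkn_full; apply: (@leq_trans (rkn S o.+1)); first by rewrite rknS Ho addn1.
by apply: rkn_mono; exact: ltn_ord.
Qed.

Lemma rkn_smono S (c d : 'I_n) : c \in S -> c < d -> rkn S c < rkn S d.
Proof.
move=> Hc Hcd; apply: (@leq_trans (rkn S c.+1)); first by rewrite rknS Hc addn1.
exact: rkn_mono.
Qed.

Lemma rkn_surj S c : c < #|S| -> exists2 j : 'I_n, j \in S & rkn S j = c.
Proof.
rewrite -rkn_full.
suff : forall m, m <= n -> c < rkn S m -> exists2 j : 'I_n, j \in S & rkn S j = c.
  by move=> H; apply: H.
elim=> [|m IH] Hm; first by rewrite rkn0.
have rS := rknS S (Ordinal Hm); rewrite /= in rS; rewrite rS.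
case: (ltnP c (rkn S m)) => Hc; first by move=> _; apply: IH => //; exact: ltnW.
case: (boolP (Ordinal Hm \in S)) => Hin; last by rewrite addn0 => H; move: (leq_trans H Hc); rewrite ltnn.
rewrite addn1 ltnS => Hc'; exists (Ordinal Hm) => //=; apply/eqP; rewrite eqn_leq Hc Hc'; done.
Qed.

Lemma rkn_preim S (f : 'I_n -> 'I_n) (c : nat) :
  injective f -> (forall l : 'I_n, (f l < c) = (l < c)) -> rkn (f @^-1: S) c = rkn S c.
Proof.
move=> finj Hf; rewrite /rkn -(card_preimset [set l in S | (l:nat) < c] finj).
by apply: eq_card => x; rewrite !inE Hf.
Qed.

End Rk.


Section Mg.
Variable k : nat.
Notation Mx n := 'M['I_k.+1]_n.

Lemma mget_ord m (A : Mx m) (i j : 'I_m) : mget A i j = A i j.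
Proof. by rewrite /mget !valK. Qed.

Lemma mget_nz m (A : Mx m) (i j : nat) : mget A i j != ord0 ->
  exists io : 'I_m, exists jo : 'I_m, [/\ (io : nat) = i, (jo : nat) = j & A io jo != ord0].
Proof.
rewrite /mget; case: insubP => [io _ Ei|//]; case: insubP => [jo _ Ej|//] H.
by exists io, jo.
Qed.

Lemma mget_xcol m (A : Mx m) (a a' c : 'I_m) r :
  mget (xcol a a' A) r c = mget A r (tperm a a' c).
Proof. by rewrite /mget !valK; case: insub => // r'; rewrite /xcol /col_perm mxE. Qed.

Lemma xcol_entry m (A : Mx m) (a a' r c : 'I_m) : xcol a a' A r c = A r (tperm a a' c).
Proof. by rewrite /xcol /col_perm mxE. Qed.

Lemma tperm_lt n (i j : 'I_n) (c : nat) : (j : nat) = i.+1 -> c != j ->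
  forall l : 'I_n, (tperm i j l < c) = (l < c).
Proof.
move=> Ej Hc l; case: (tpermP i j l) => [->|->|//]; rewrite Ej; move: Hc; rewrite Ej; lia.
Qed.

Definition colnz m (A : Mx m) := forall j : 'I_m, exists i : 'I_m, A i j != ord0.

Lemma colnz_xcol m (A : Mx m) a a' : colnz A -> colnz (xcol a a' A).
Proof. by move=> H j; case: (H (tperm a a' j)) => i Hi; exists i; rewrite xcol_entry. Qed.

Lemma mstepP n (M M' : Mx n) : reflect (exists i j : 'I_n, [/\ (j:nat) = i.+1, star M i j & M' = xcol i j M])
   (mstep M M').
Proof.
apply: (iffP existsP) => [[i /existsP[j /and3P[/eqP E /star_iff S /eqP ->]]]|[i [j [E S ->]]]].
  by exists i, j.
by exists i; apply/existsP; exists j; rewrite E eqxx /= eqxx andbT; apply/star_iff.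
Qed.

Lemma colnz_step n (M M' : Mx n) : mstep M M' -> colnz M -> colnz M'.
Proof. by move/mstepP => [i [j [_ _ ->]]]; apply: colnz_xcol. Qed.

Lemma colnz_step' n (M M' : Mx n) : mstep M M' -> colnz M' -> colnz M.
Proof.
move/mstepP => [i [j [_ _ ->]]] H; have := colnz_xcol i j H.
by rewrite /xcol -col_permM tperm2 col_perm1.
Qed.
End Mg.


Section Sh.
Variables k n1 n2 : nat.
Notation Mx n := 'M['I_k.+1]_n.
Notation n := (n1 + n2).
Notation sh := (@shuffle_mx k n1 n2).

Lemma shE (X : {set 'I_n}) (A : Mx n1) (B : Mx n2) (r c : 'I_n) : sh X A B r c =
  if c \in X then (if r < n1 then mget A r (rkn X c) else ord0)
  else (if n1 <= r then mget B (r - n1) (rkn (~: X) c) else ord0).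
Proof. by rewrite mxE. Qed.

Lemma sh_in_rk (X : {set 'I_n}) (c : 'I_n) : c \in X -> #|X| = n1 -> rkn X c < n1.
Proof. by move=> Hc hX; rewrite -[X in _ < X]hX; apply: rkn_lt. Qed.

Lemma sh_out_rk (X : {set 'I_n}) (c : 'I_n) : c \notin X -> #|X| = n1 -> rkn (~: X) c < n2.
Proof.
move=> Hc hX; have : #|~: X| = n2 by have := cardsC X; rewrite hX card_ord; lia.
by move=> E; rewrite -[X in _ < X]E; apply: rkn_lt; rewrite inE.
Qed.

Lemma sh_xcol_in (X : {set 'I_n}) (A : Mx n1) (B : Mx n2) (i j : 'I_n) (a a' : 'I_n1) : #|X| = n1 -> (j:nat) = i.+1 ->
  i \in X -> j \in X -> rkn X i = a -> (a':nat) = a.+1 ->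
  xcol i j (sh X A B) = sh X (xcol a a' A) B.
Proof.
move=> hX Ej Hi Hj Ea Ea'.
have Ej' : rkn X j = a' by rewrite Ej rknS Hi Ea Ea' addn1.
apply/matrixP => r c; rewrite xcol_entry !shE.
have Hmem : (tperm i j c \in X) = (c \in X) by case: (tpermP i j c) => [->|->|//]; rewrite ?Hi ?Hj.
rewrite Hmem; case: (boolP (c \in X)) => Hc.
  case: ifP => // Hr.
  have Hco := sh_in_rk Hc hX.
  rewrite (_ : rkn X c = Ordinal Hco) // mget_xcol; congr mget.
  case: (tpermP i j c) => [Ec|Ec|Hci Hcj].
  - rewrite (_ : Ordinal Hco = a) ?tpermL //; apply/val_inj; by rewrite /= Ec Ea.
  - rewrite (_ : Ordinal Hco = a') ?tpermR //; apply/val_inj; by rewrite /= Ec Ej'.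
  - move/eqP: Hci => Hci; move/eqP: Hcj => Hcj.
    have Hcv : (c < i) || (j < c) by move: Hci Hcj; rewrite -!val_eqE /= Ej; lia.
    by rewrite tpermD // -val_eqE /=; case/orP: Hcv => H;
      [have := rkn_smono Hc H | have := rkn_smono Hj H|have := rkn_smono Hc H | have := rkn_smono Hj H]; rewrite ?Ea ?Ej' ?Ea'; lia.
rewrite tpermD //; apply: contraNneq Hc => <- //.
Qed.
Lemma sh_xcol_out (X : {set 'I_n}) (A : Mx n1) (B : Mx n2) (i j : 'I_n) (a a' : 'I_n2) : #|X| = n1 -> (j:nat) = i.+1 ->
  i \notin X -> j \notin X -> rkn (~: X) i = a -> (a':nat) = a.+1 ->
  xcol i j (sh X A B) = sh X A (xcol a a' B).
Proof.
move=> hX Ej Hi0 Hj0 Ea Ea'.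
have Hi : i \in ~: X by rewrite inE.
have Hj : j \in ~: X by rewrite inE.
have Ej' : rkn (~: X) j = a' by rewrite Ej rknS Hi Ea Ea' addn1.
apply/matrixP => r c; rewrite xcol_entry !shE.
have Hmem : (tperm i j c \in X) = (c \in X) by case: (tpermP i j c) => [->|->|//]; rewrite (negbTE Hi0) (negbTE Hj0).
rewrite Hmem; case: (boolP (c \in X)) => Hc0; last first.
  have Hc : c \in ~: X by rewrite inE.
  case: ifP => // Hr.
  have Hco := sh_out_rk Hc0 hX.
  rewrite (_ : rkn (~: X) c = Ordinal Hco) // mget_xcol; congr mget.
  case: (tpermP i j c) => [Ec|Ec|Hci Hcj].
  - rewrite (_ : Ordinal Hco = a) ?tpermL //; apply/val_inj; by rewrite /= Ec Ea.
  - rewrite (_ : Ordinal Hco = a') ?tpermR //; apply/val_inj; by rewrite /= Ec Ej'.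
  - move/eqP: Hci => Hci; move/eqP: Hcj => Hcj.
    have Hcv : (c < i) || (j < c) by move: Hci Hcj; rewrite -!val_eqE /= Ej; lia.
    by rewrite tpermD // -val_eqE /=; case/orP: Hcv => H;
      [have := rkn_smono Hc H | have := rkn_smono Hj H|have := rkn_smono Hc H | have := rkn_smono Hj H]; rewrite ?Ea ?Ej' ?Ea'; lia.
by rewrite tpermD //; apply: contraTneq Hc0 => <-.
Qed.
End Sh.


Lemma rk_mix n (S : {set 'I_n}) (i j c : 'I_n) : (j : nat) = i.+1 -> (i \in S) != (j \in S) ->
  tperm i j c \in S -> rkn S (tperm i j c) = rkn (tperm i j @^-1: S) c.
Proof.
move=> Ej Hd.
case: (tpermP i j c) => [->|->|Hci Hcj] Hin.
- have Hi : i \notin S by move: Hd; rewrite Hin; case: (i \in S).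
  rewrite Ej rknS (negbTE Hi) addn0 rkn_preim //; [exact: perm_inj|apply: tperm_lt => //; rewrite Ej; apply/eqP; lia].
- have Hj : j \notin S by move: Hd; rewrite Hin; case: (j \in S).
  rewrite Ej rknS inE tpermL (negbTE Hj) addn0 rkn_preim //; [exact: perm_inj|apply: tperm_lt => //; rewrite Ej; apply/eqP; lia].
- rewrite rkn_preim //; [exact: perm_inj|apply: tperm_lt => //].
  by move/eqP: Hcj; rewrite -val_eqE.
Qed.

Section Sh2.
Variables k n1 n2 : nat.
Notation Mx n := 'M['I_k.+1]_n.
Notation n := (n1 + n2).
Notation sh := (@shuffle_mx k n1 n2).

Lemma sh_xcol_mix (X : {set 'I_n}) (A : Mx n1) (B : Mx n2) (i j : 'I_n) :
  (j : nat) = i.+1 -> (i \in X) != (j \in X) ->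
  xcol i j (sh X A B) = sh (tperm i j @^-1: X) A B.
Proof.
move=> Ej Hd; apply/matrixP => r c; rewrite xcol_entry !shE [c \in _]inE.
case: (boolP (tperm i j c \in X)) => H; first by rewrite rk_mix.
rewrite -preimsetC rk_mix //; last by rewrite inE.
by rewrite !inE; case: (i \in X) Hd; case: (j \in X).
Qed.

Lemma card_mix (X : {set 'I_n}) (i j : 'I_n) : #|tperm i j @^-1: X| = #|X|.
Proof. apply: card_preimset; exact: perm_inj. Qed.

Lemma star_mix (X : {set 'I_n}) (A : Mx n1) (B : Mx n2) (i j : 'I_n) :
  i \in X -> j \notin X -> star (sh X A B) i j.
Proof.
move=> Hi Hj r r'; rewrite !shE Hi (negbTE Hj).
case: ifP => // Hr _; case: ifP => // Hr' _; lia.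
Qed.

Lemma star_mix_bad (X : {set 'I_n}) (A : Mx n1) (B : Mx n2) (i j : 'I_n) :
  #|X| = n1 -> colnz A -> colnz B -> i \notin X -> j \in X -> ~ star (sh X A B) i j.
Proof.
move=> hX cA cB Hi Hj S.
have [r0 H0] := cB (Ordinal (sh_out_rk Hi hX)).
have [r1 H1] := cA (Ordinal (sh_in_rk Hj hX)).
have := S (rshift n1 r0) (lshift n2 r1).
rewrite !shE (negbTE Hi) Hj /= ifT ?leq_addr // ifT ?ltn_ord // addKn.
rewrite -(mget_ord A) -(mget_ord B) /= in H0 H1.
move=> /(_ H0 H1); have := ltn_ord r1; lia.
Qed.

Lemma star_in (X : {set 'I_n}) (A : Mx n1) (B : Mx n2) (i j : 'I_n) (a a' : 'I_n1) :
  i \in X -> j \in X -> rkn X i = a -> rkn X j = a' ->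
  star (sh X A B) i j <-> star A a a'.
Proof.
move=> Hi Hj Ea Ea'; split.
- move=> S r r' H H'; have := S (lshift n2 r) (lshift n2 r').
  rewrite !shE Hi Hj /= !ltn_ord Ea Ea' !mget_ord; exact.
- move=> S r r'; rewrite !shE Hi Hj Ea Ea'.
  case: ifP => // Hr /mget_nz [ro [ao [Er Eao Hnz]]].
  case: ifP => // Hr' /mget_nz [ro' [ao' [Er' Eao' Hnz']]].
  have Ha : ao = a by apply/val_inj.
  have Ha' : ao' = a' by apply/val_inj.
  rewrite Ha in Hnz; rewrite Ha' in Hnz'.
  rewrite -Er -Er'; exact: S Hnz Hnz'.
Qed.

Lemma star_out (X : {set 'I_n}) (A : Mx n1) (B : Mx n2) (i j : 'I_n) (a a' : 'I_n2) :
  i \notin X -> j \notin X -> rkn (~: X) i = a -> rkn (~: X) j = a' ->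
  star (sh X A B) i j <-> star B a a'.
Proof.
move=> Hi Hj Ea Ea'; split.
- move=> S r r' H H'; have := S (rshift n1 r) (rshift n1 r').
  rewrite !shE (negbTE Hi) (negbTE Hj) /= !leq_addr !addKn Ea Ea' !mget_ord => /(_ H H').
  by rewrite ltn_add2l.
- move=> S r r'; rewrite !shE (negbTE Hi) (negbTE Hj) Ea Ea'.
  case: ifP => // Hr /mget_nz [ro [ao [Er Eao Hnz]]].
  case: ifP => // Hr' /mget_nz [ro' [ao' [Er' Eao' Hnz']]].
  have Ha : ao = a by apply/val_inj.
  have Ha' : ao' = a' by apply/val_inj.
  rewrite Ha in Hnz; rewrite Ha' in Hnz'.
  have := S _ _ Hnz Hnz'; lia.
Qed.
End Sh2.


Lemma xcolK' k m (i j : 'I_m) (M : 'M['I_k.+1]_m) : xcol i j (xcol i j M) = M.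
Proof. by apply/matrixP => r c; rewrite !xcol_entry tpermK. Qed.

Section Sh3.
Variables k n1 n2 : nat.
Notation Mx n := 'M['I_k.+1]_n.
Notation n := (n1 + n2).
Notation sh := (@shuffle_mx k n1 n2).

Lemma closE (X : {set 'I_n}) (A : Mx n1) (B : Mx n2) (N' : Mx n) : #|X| = n1 -> mstep (sh X A B) N' ->
  (exists A', mstep A A' /\ N' = sh X A' B) \/ (exists B', mstep B B' /\ N' = sh X A B') \/
  (exists X' : {set 'I_n}, #|X'| = n1 /\ N' = sh X' A B).
Proof.
move=> hX /mstepP [i [j [Ej S ->]]].
case: (boolP (i \in X)) => Hi; case: (boolP (j \in X)) => Hj.
- left.
  pose a := Ordinal (sh_in_rk Hi hX); pose a' := Ordinal (sh_in_rk Hj hX).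
  have Ea' : (a' : nat) = a.+1 by rewrite /= Ej rknS Hi addn1.
  exists (xcol a a' A); split; last exact: sh_xcol_in.
  apply/mstepP; exists a, a'; split => //.
  exact: (proj1 (@star_in _ _ _ _ A B _ _ a a' Hi Hj (erefl _) (erefl _)) S).
- right; right; exists (tperm i j @^-1: X); split; first by rewrite card_mix.
  by apply: sh_xcol_mix => //; rewrite Hi Hj.
- right; right; exists (tperm i j @^-1: X); split; first by rewrite card_mix.
  by apply: sh_xcol_mix => //; rewrite (negbTE Hi) Hj.
- right; left.
  pose a := Ordinal (sh_out_rk Hi hX); pose a' := Ordinal (sh_out_rk Hj hX).
  have Hi' : i \in ~: X by rewrite inE.
  have Ea' : (a' : nat) = a.+1 by rewrite /= Ej rknS Hi' addn1.
  exists (xcol a a' B); split; last exact: sh_xcol_out.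
  apply/mstepP; exists a, a'; split => //.
  exact: (proj1 (@star_out _ _ _ _ A B _ _ a a' Hi Hj (erefl _) (erefl _)) S).
Qed.

Lemma closH (X : {set 'I_n}) (A : Mx n1) (B : Mx n2) (N' : Mx n) : #|X| = n1 ->
  colnz A -> colnz B -> mstep N' (sh X A B) ->
  (exists A', mstep A' A /\ N' = sh X A' B) \/ (exists B', mstep B' B /\ N' = sh X A B') \/
  (exists X' : {set 'I_n}, #|X'| = n1 /\ N' = sh X' A B).
Proof.
move=> hX cA cB /mstepP [i [j [Ej S E]]].
have EN : N' = xcol i j (sh X A B) by rewrite E xcolK'.
case: (boolP (i \in X)) => Hi; case: (boolP (j \in X)) => Hj.
- left.
  pose a := Ordinal (sh_in_rk Hi hX); pose a' := Ordinal (sh_in_rk Hj hX).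
  have Ea' : (a' : nat) = a.+1 by rewrite /= Ej rknS Hi addn1.
  have EN' : N' = sh X (xcol a a' A) B by rewrite EN; exact: sh_xcol_in.
  exists (xcol a a' A); split => //.
  apply/mstepP; exists a, a'; split => //; last by rewrite xcolK'.
  rewrite EN' in S; exact: (proj1 (@star_in _ _ _ _ _ B _ _ a a' Hi Hj (erefl _) (erefl _)) S).
- exfalso.
  have EN' : N' = sh (tperm i j @^-1: X) A B by rewrite EN; apply: sh_xcol_mix => //; rewrite Hi Hj.
  rewrite EN' in S; apply: (star_mix_bad _ cA cB _ _ S); first by rewrite card_mix.
  + by rewrite inE tpermL.
  + by rewrite inE tpermR.
- right; right; exists (tperm i j @^-1: X); split; first by rewrite card_mix.
  by rewrite EN; apply: sh_xcol_mix => //; rewrite (negbTE Hi) Hj.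
- right; left.
  pose a := Ordinal (sh_out_rk Hi hX); pose a' := Ordinal (sh_out_rk Hj hX).
  have Hi' : i \in ~: X by rewrite inE.
  have Ea' : (a' : nat) = a.+1 by rewrite /= Ej rknS Hi' addn1.
  have EN' : N' = sh X A (xcol a a' B) by rewrite EN; exact: sh_xcol_out.
  exists (xcol a a' B); split => //.
  apply/mstepP; exists a, a'; split => //; last by rewrite xcolK'.
  rewrite EN' in S; exact: (proj1 (@star_out _ _ _ _ A _ _ _ a a' Hi Hj (erefl _) (erefl _)) S).
Qed.
End Sh3.


Lemma connect_map (T U : finType) (e : rel T) (e' : rel U) (f : T -> U) :
  (forall x y, e x y -> e' (f x) (f y)) -> forall x y, connect e x y -> connect e' (f x) (f y).
Proof.
move=> H x y /connectP [p Hp ->]; elim: p x Hp => [|z p IH] x /=; first by move=> _; exact: connect0.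
by move/andP=> [Hxz Hp]; apply: connect_trans (connect1 (H _ _ Hxz)) (IH _ Hp).
Qed.

Lemma connect_fwd (T : finType) (e : rel T) (P : T -> Prop) :
  (forall x y, P x -> e x y -> P y) -> forall x y, connect e x y -> P x -> P y.
Proof.
move=> H x y /connectP [p Hp ->]; elim: p x Hp => [|z p IH] x //=.
by move/andP=> [Hxz Hp] Px; apply: (IH _ Hp); exact: H Px Hxz.
Qed.

Lemma connect_bwd (T : finType) (e : rel T) (P : T -> Prop) :
  (forall x y, P y -> e x y -> P x) -> forall x y, connect e x y -> P y -> P x.
Proof.
move=> H x y /connectP [p Hp ->]; elim: p x Hp => [|z p IH] x //=.
by move/andP=> [Hxz Hp] Py; apply: (H _ _ _ Hxz); exact: IH.
Qed.

Lemma ivt n (p : pred 'I_n) (a b : 'I_n) : ~~ p a -> p b -> a < b ->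
  exists i j : 'I_n, [/\ (j : nat) = i.+1, ~~ p i & p j].
Proof.
move=> Ha Hb Hab.
suff : forall d (a : 'I_n), (b : nat) = a + d.+1 -> ~~ p a ->
  exists i j : 'I_n, [/\ (j : nat) = i.+1, ~~ p i & p j].
  by move=> H; apply: (H (b - a.+1) a) => //; lia.
elim=> [|d IH] a' Eb Ha'.
  by exists a', b; split => //; rewrite Eb addn1.
have Ha1 : a'.+1 < n by have := ltn_ord b; lia.
case: (boolP (p (Ordinal Ha1))) => H1.
  by exists a', (Ordinal Ha1).
by apply: (IH (Ordinal Ha1)) => //=; rewrite Eb; lia.
Qed.

Lemma mu_mix n (f : 'I_n -> nat) (X : {set 'I_n}) (i j : 'I_n) : i \in X -> j \notin X ->
  \sum_(l in tperm i j @^-1: X) f l + f i = \sum_(l in X) f l + f j.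
Proof.
move=> Hi Hj.
have Hij : i != j by apply: contraNneq Hj => <-.
have -> : tperm i j @^-1: X = j |: (X :\ i).
  apply/setP => l; rewrite !inE; case: (tpermP i j l) => [->|->|Hli Hlj].
  - by rewrite (negbTE Hj) (negbTE Hij) eqxx.
  - by rewrite eqxx.
  - by move/eqP: Hli => /negbTE ->; move/eqP: Hlj => /negbTE ->.
rewrite big_setU1 /=; last by rewrite !inE negb_and (negbTE Hj) orbT.
rewrite (big_setD1 _ Hi) /=; set S := \sum_(_ in _) _; lia.
Qed.

Lemma preimK n (i j : 'I_n) (X : {set 'I_n}) : tperm i j @^-1: (tperm i j @^-1: X) = X.
Proof. by apply/setP => l; rewrite !inE tpermK. Qed.

Lemma rkn_init n (S : {set 'I_n}) m : (forall l : 'I_n, l < m -> l \in S) -> m <= n -> rkn S m = m.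
Proof.
elim: m => [|m IH] H Hm; first exact: rkn0.
have := rknS S (Ordinal Hm); rewrite /= => ->.
by rewrite IH ?H ?addn1 //; [move=> l Hl; apply: H; exact: ltnW| exact: ltnW].
Qed.

Lemma rkn_after n (S : {set 'I_n}) m d : (forall l : 'I_n, l < m -> l \notin S) ->
  (forall l : 'I_n, m <= l -> l \in S) -> m + d <= n -> rkn S (m + d) = d.
Proof.
move=> H1 H2; elim: d => [|d IH] Hd.
  rewrite addn0 /rkn; apply/eqP; rewrite cards_eq0; apply/eqP/setP => x; rewrite !inE.
  by apply/negP => /andP[Hx Hxm]; move: (H1 x Hxm); rewrite Hx.
have Ho : m + d < n by rewrite -addnS.
rewrite addnS (rknS S (Ordinal Ho)) /= IH ?H2 ?addn1 //=; [exact: leq_addr|exact: ltnW].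
Qed.

Definition mgetr k m p (A : 'M['I_k.+1]_(m, p)) (i j : nat) : 'I_k.+1 :=
  match (insub i : option 'I_m), (insub j : option 'I_p) with
  | Some i', Some j' => A i' j'
  | _, _ => ord0
  end.

Lemma mgetr_sq k m (A : 'M['I_k.+1]_m) i j : mgetr A i j = mget A i j.
Proof. by []. Qed.

Lemma mgetr_const k m p (i j : nat) : mgetr (const_mx ord0 : 'M['I_k.+1]_(m, p)) i j = ord0 :> 'I_k.+1.
Proof. by rewrite /mgetr; case: insub => // ?; case: insub => // ?; rewrite mxE. Qed.

Lemma block_entry k m1 m2 p1 p2 (Aul : 'M['I_k.+1]_(m1, p1)) (Aur : 'M['I_k.+1]_(m1, p2))
  (Adl : 'M['I_k.+1]_(m2, p1)) (Adr : 'M['I_k.+1]_(m2, p2)) (r : 'I_(m1 + m2)) (c : 'I_(p1 + p2)) :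
  block_mx Aul Aur Adl Adr r c =
  if r < m1 then (if c < p1 then mgetr Aul r c else mgetr Aur r (c - p1))
  else (if c < p1 then mgetr Adl (r - m1) c else mgetr Adr (r - m1) (c - p1)).
Proof.
have mg : forall m p (A : 'M['I_k.+1]_(m, p)) (i : 'I_m) (j : 'I_p), mgetr A i j = A i j.
  by move=> m p A i j; rewrite /mgetr !valK.
case: splitP => r' Er; case: splitP => c' Ec.
- have -> : r = lshift m2 r' by apply/val_inj.
  have -> : c = lshift p2 c' by apply/val_inj.
  by rewrite block_mxEul mg.
- have -> : r = lshift m2 r' by apply/val_inj.
  have -> : c = rshift p1 c' by apply/val_inj.
  by rewrite block_mxEur /= addKn mg.
- have -> : r = rshift m1 r' by apply/val_inj.
  have -> : c = lshift p2 c' by apply/val_inj.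
  by rewrite block_mxEdl /= addKn mg.
- have -> : r = rshift m1 r' by apply/val_inj.
  have -> : c = rshift p1 c' by apply/val_inj.
  by rewrite block_mxEdr /= !addKn mg.
Qed.


Section Sh4.
Variables k n1 n2 : nat.
Notation Mx n := 'M['I_k.+1]_n.
Notation n := (n1 + n2).
Notation sh := (@shuffle_mx k n1 n2).

Definition X0 : {set 'I_n} := [set l : 'I_n | l < n1].
Definition X1 : {set 'I_n} := [set l : 'I_n | n2 <= l].

Lemma rkX0 (c : 'I_n) : c < n1 -> rkn X0 c = c.
Proof. move=> Hc; apply: rkn_init; last exact: ltnW. by move=> l Hl; rewrite inE; lia. Qed.

Lemma rkX0c (c : 'I_n) : n1 <= c -> rkn (~: X0) c = c - n1.
Proof.
move=> Hc; have := @rkn_after _ (~: X0) n1 (c - n1); rewrite subnKC //; apply.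
- by move=> l Hl; rewrite !inE Hl.
- by move=> l Hl; rewrite !inE -leqNgt.
- exact: ltnW.
Qed.

Lemma rkX1 (c : 'I_n) : n2 <= c -> rkn X1 c = c - n2.
Proof.
move=> Hc; have := @rkn_after _ X1 n2 (c - n2); rewrite subnKC //; apply.
- by move=> l Hl; rewrite !inE -ltnNge.
- by move=> l Hl; rewrite !inE.
- exact: ltnW.
Qed.

Lemma rkX1c (c : 'I_n) : c < n2 -> rkn (~: X1) c = c.
Proof. move=> Hc; apply: rkn_init; last exact: ltnW. by move=> l Hl; rewrite !inE; lia. Qed.

Lemma cardX0 : #|X0| = n1.
Proof.
have H : rkn [set: 'I_n] n1 = n1 by apply: rkn_init => //; [move=> *; rewrite inE|exact: leq_addr].
transitivity (rkn [set: 'I_n] n1); last exact: H.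
by apply: eq_card => x; rewrite !inE.
Qed.

Lemma cardX1 : #|X1| = n1.
Proof.
have H : rkn [set: 'I_n] n2 = n2 by apply: rkn_init => //; [move=> *; rewrite inE|exact: leq_addl].
have : #|~: X1| = n2.
  transitivity (rkn [set: 'I_n] n2); last exact: H.
  by apply: eq_card => x; rewrite !inE -ltnNge.
have := cardsC X1; rewrite card_ord; lia.
Qed.

Lemma ov_sh (A : Mx n1) (B : Mx n2) :
  block_mx A (const_mx ord0 : 'M_(n1, n2)) (const_mx ord0 : 'M_(n2, n1)) B = sh X0 A B.
Proof.
apply/matrixP => r c; rewrite block_entry shE inE !mgetr_const !mgetr_sq.
case: (ltnP c n1) => Hc.
  by rewrite rkX0 //; case: ifP.
by rewrite rkX0c //; case: (ltnP r n1).
Qed.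

Lemma un_sh (A : Mx n1) (B : Mx n2) :
  castmx (erefl, addnC n2 n1) (block_mx (const_mx ord0 : 'M_(n1, n2)) A B (const_mx ord0 : 'M_(n2, n1)))
  = sh X1 A B.
Proof.
apply/matrixP => r c; rewrite castmxE block_entry shE inE !mgetr_const !mgetr_sq /=.
case: (ltnP c n2) => Hc.
  by rewrite rkX1c //; case: (ltnP r n1).
by rewrite rkX1 //; case: ifP.
Qed.

Lemma find0 (X : {set 'I_n}) : X != X0 -> #|X| = n1 ->
  exists i j : 'I_n, [/\ (j : nat) = i.+1, i \notin X & j \in X].
Proof.
move=> neq hX.
have HcA : #|X0| = #|X| by rewrite cardX0 hX.
have [a Ha Hna] : exists2 a, a \in X0 & a \notin X.
  apply/subsetPn; apply/negP => /(subset_cardP HcA) E.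
  by move: neq; rewrite (_ : X = X0) ?eqxx //; apply/setP => x; rewrite E.
have [b Hb Hnb] : exists2 b, b \in X & b \notin X0.
  apply/subsetPn; apply/negP => /(subset_cardP (esym HcA)) E.
  by move: neq; rewrite (_ : X = X0) ?eqxx //; apply/setP => x; rewrite E.
move: Ha Hnb; rewrite !inE -leqNgt => Ha Hb'.
have [i [j [Ej Hi Hj]]] := @ivt _ (fun l => l \in X) a b Hna Hb (leq_trans Ha Hb').
by exists i, j.
Qed.

Lemma find1 (X : {set 'I_n}) : X != X1 -> #|X| = n1 ->
  exists i j : 'I_n, [/\ (j : nat) = i.+1, i \in X & j \notin X].
Proof.
move=> neq hX.
have HcA : #|X1| = #|X| by rewrite cardX1 hX.
have [b Hb Hnb] : exists2 a, a \in X1 & a \notin X.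
  apply/subsetPn; apply/negP => /(subset_cardP HcA) E.
  by move: neq; rewrite (_ : X = X1) ?eqxx //; apply/setP => x; rewrite E.
have [a Ha Hna] : exists2 b, b \in X & b \notin X1.
  apply/subsetPn; apply/negP => /(subset_cardP (esym HcA)) E.
  by move: neq; rewrite (_ : X = X1) ?eqxx //; apply/setP => x; rewrite E.
move: Hb Hna; rewrite !inE -ltnNge => Hb' Ha'.
have [i [j [Ej Hi Hj]]] := @ivt _ (fun l => l \notin X) a b (introT negPn Ha) Hnb (leq_trans Ha' Hb').
by exists i, j; rewrite (negbNE Hi).
Qed.

Lemma move0 (A : Mx n1) (B : Mx n2) (X : {set 'I_n}) : #|X| = n1 -> leM (sh X0 A B) (sh X A B).
Proof.
suff H : forall m (X : {set 'I_n}), \sum_(l in X) (l : nat) <= m -> #|X| = n1 -> leM (sh X0 A B) (sh X A B).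
  by move=> hX; exact: H _ X (leqnn _) hX.
elim=> [|m IH] X' hm hX; (case: (eqVneq X' X0) => [->|neq]; first exact: connect0);
have [i [j [Ej Hi Hj]]] := find0 neq hX;
set Y := tperm i j @^-1: X';
(have HiY : i \in Y by rewrite inE tpermL);
(have HjY : j \notin Y by rewrite inE tpermR);
have Hmu := @mu_mix _ (fun l : 'I_n => (l : nat)) _ _ _ HiY HjY; rewrite preimK /= in Hmu;
move: Hmu hm; set S1 := \sum_(l in X') _; set S2 := \sum_(l in Y) _ => Hmu hm.
  exfalso; lia.
have HY : S2 <= m by lia.
move: (IH Y HY); rewrite /leM => IH'; apply: connect_trans (IH' _) _; first by rewrite card_mix.
apply: connect1; apply/mstepP; exists i, j; split => //; first exact: star_mix.
by rewrite sh_xcol_mix ?preimK // HiY (negbTE HjY).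
Qed.

Lemma move1 (A : Mx n1) (B : Mx n2) (X : {set 'I_n}) : #|X| = n1 -> leM (sh X A B) (sh X1 A B).
Proof.
suff H : forall m (X : {set 'I_n}), \sum_(l in X) (n - l) <= m -> #|X| = n1 -> leM (sh X A B) (sh X1 A B).
  by move=> hX; exact: H _ X (leqnn _) hX.
elim=> [|m IH] X' hm hX; (case: (eqVneq X' X1) => [->|neq]; first exact: connect0);
have [i [j [Ej Hi Hj]]] := find1 neq hX;
set Y := tperm i j @^-1: X';
have Hmu := @mu_mix _ (fun l : 'I_n => n - l) _ _ _ Hi Hj; rewrite /= in Hmu;
move: Hmu hm; set S1 := \sum_(l in X') _; set S2 := \sum_(l in Y) _ => Hmu hm;
have := ltn_ord j.
  move=> ?; exfalso; lia.
move=> Hjn; have HY : S2 <= m by lia.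
move: (IH Y HY); rewrite /leM => IH'; apply: connect_trans (IH' _); last by rewrite card_mix.
apply: connect1; apply/mstepP; exists i, j; split => //; first exact: star_mix.
by rewrite sh_xcol_mix // Hi (negbTE Hj).
Qed.
End Sh4.


Section Sh5.
Variables k n1 n2 : nat.
Notation Mx n := 'M['I_k.+1]_n.
Notation n := (n1 + n2).
Notation sh := (@shuffle_mx k n1 n2).

Lemma liftA0 (A A' : Mx n1) (B : Mx n2) : mstep A A' -> mstep (sh (X0 n1 n2) A B) (sh (X0 n1 n2) A' B).
Proof.
move/mstepP => [a [a' [Ea S ->]]].
have Hi : lshift n2 a \in X0 n1 n2 by rewrite inE /= ltn_ord.
have Hj : lshift n2 a' \in X0 n1 n2 by rewrite inE /= ltn_ord.
have Ei : rkn (X0 n1 n2) (lshift n2 a) = a by rewrite rkX0 //= ltn_ord.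
have Ej : rkn (X0 n1 n2) (lshift n2 a') = a' by rewrite rkX0 //= ltn_ord.
apply/mstepP; exists (lshift n2 a), (lshift n2 a'); split => //.
  exact: (proj2 (star_in A B Hi Hj Ei Ej) S).
by rewrite (sh_xcol_in A B (cardX0 _ _) _ Hi Hj Ei Ea).
Qed.

Lemma liftB0 (A : Mx n1) (B B' : Mx n2) : mstep B B' -> mstep (sh (X0 n1 n2) A B) (sh (X0 n1 n2) A B').
Proof.
move/mstepP => [a [a' [Ea S ->]]].
have Hi : rshift n1 a \notin X0 n1 n2 by rewrite inE /= -leqNgt leq_addr.
have Hj : rshift n1 a' \notin X0 n1 n2 by rewrite inE /= -leqNgt leq_addr.
have Ei : rkn (~: X0 n1 n2) (rshift n1 a) = a by rewrite rkX0c //= ?leq_addr // addKn.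
have Ej : rkn (~: X0 n1 n2) (rshift n1 a') = a' by rewrite rkX0c //= ?leq_addr // addKn.
apply/mstepP; exists (rshift n1 a), (rshift n1 a'); split => //=.
  by rewrite Ea addnS.
  exact: (proj2 (star_out A B Hi Hj Ei Ej) S).
by rewrite (sh_xcol_out A B (cardX0 _ _) _ Hi Hj Ei Ea) //= Ea addnS.
Qed.

Lemma liftA1 (A A' : Mx n1) (B : Mx n2) : mstep A A' -> mstep (sh (X1 n1 n2) A B) (sh (X1 n1 n2) A' B).
Proof.
move/mstepP => [a [a' [Ea S ->]]].
have Ha : n2 + a < n by rewrite addnC ltn_add2r.
have Ha' : n2 + a' < n by rewrite addnC ltn_add2r.
have Hi : Ordinal Ha \in X1 n1 n2 by rewrite inE /= leq_addr.
have Hj : Ordinal Ha' \in X1 n1 n2 by rewrite inE /= leq_addr.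
have Ei : rkn (X1 n1 n2) (Ordinal Ha) = a by rewrite rkX1 //= ?leq_addr // addKn.
have Ej : rkn (X1 n1 n2) (Ordinal Ha') = a' by rewrite rkX1 //= ?leq_addr // addKn.
apply/mstepP; exists (Ordinal Ha), (Ordinal Ha'); split => //=.
  by rewrite Ea addnS.
  exact: (proj2 (star_in A B Hi Hj Ei Ej) S).
by rewrite (sh_xcol_in A B (cardX1 _ _) _ Hi Hj Ei Ea) //= Ea addnS.
Qed.

Lemma liftB1 (A : Mx n1) (B B' : Mx n2) : mstep B B' -> mstep (sh (X1 n1 n2) A B) (sh (X1 n1 n2) A B').
Proof.
move/mstepP => [a [a' [Ea S ->]]].
have Ha : a < n by rewrite (leq_trans (ltn_ord a)) // leq_addl.
have Ha' : a' < n by rewrite (leq_trans (ltn_ord a')) // leq_addl.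
have Hi : Ordinal Ha \notin X1 n1 n2 by rewrite inE /= -ltnNge ltn_ord.
have Hj : Ordinal Ha' \notin X1 n1 n2 by rewrite inE /= -ltnNge ltn_ord.
have Ei : rkn (~: X1 n1 n2) (Ordinal Ha) = a by rewrite rkX1c //= ltn_ord.
have Ej : rkn (~: X1 n1 n2) (Ordinal Ha') = a' by rewrite rkX1c //= ltn_ord.
apply/mstepP; exists (Ordinal Ha), (Ordinal Ha'); split => //=.
  exact: (proj2 (star_out A B Hi Hj Ei Ej) S).
by rewrite (sh_xcol_out A B (cardX1 _ _) _ Hi Hj Ei Ea).
Qed.

Lemma charE (A0 : Mx n1) (B0 : Mx n2) (N : Mx n) :
  leM (sh (X0 n1 n2) A0 B0) N <->
  exists (X : {set 'I_n}) A B, [/\ #|X| = n1, leM A0 A, leM B0 B & N = sh X A B].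
Proof.
split.
- move=> H; apply: (@connect_fwd _ _ (fun N => exists (X : {set 'I_n}) A B, [/\ #|X| = n1, leM A0 A, leM B0 B & N = sh X A B]) _ _ _ H); last first.
    by exists (X0 n1 n2), A0, B0; split; rewrite ?cardX0 //; exact: connect0.
  move=> x y [X [A [B [hX HA HB ->]]]] /(closE hX) [[A' [HS ->]]|[[B' [HS ->]]|[X' [hX' ->]]]].
  + exists X, A', B; split => //; exact: connect_trans HA (connect1 HS).
  + exists X, A, B'; split => //; exact: connect_trans HB (connect1 HS).
  + by exists X', A, B.
- move=> [X [A [B [hX HA HB ->]]]].
  apply: connect_trans (move0 A B hX).
  apply: connect_trans (connect_map (@liftB0 A) HB).
  exact: (connect_map (fun x y => @liftA0 x y B0) HA).
Qed.

Lemma colnz_bwd m (A A0 : Mx m) : leM A A0 -> colnz A0 -> colnz A.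
Proof. by move=> H; apply: (@connect_bwd _ _ (@colnz k m) _ _ _ H) => x y Hy Hxy; exact: colnz_step' Hxy Hy. Qed.

Lemma charH (A0 : Mx n1) (B0 : Mx n2) (N : Mx n) : colnz A0 -> colnz B0 ->
  leM N (sh (X1 n1 n2) A0 B0) <->
  exists (X : {set 'I_n}) A B, [/\ #|X| = n1, leM A A0, leM B B0 & N = sh X A B].
Proof.
move=> cA0 cB0; split.
- move=> H; apply: (@connect_bwd _ _ (fun N => exists (X : {set 'I_n}) A B, [/\ #|X| = n1, leM A A0, leM B B0 & N = sh X A B]) _ _ _ H); last first.
    by exists (X1 n1 n2), A0, B0; split; rewrite ?cardX1 //; exact: connect0.
  move=> x y [X [A [B [hX HA HB ->]]]] Hxy.
  have [[A' [HS ->]]|[[B' [HS ->]]|[X' [hX' ->]]]] :=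
    closH hX (colnz_bwd HA cA0) (colnz_bwd HB cB0) Hxy.
  + exists X, A', B; split => //; exact: connect_trans (connect1 HS) HA.
  + exists X, A, B'; split => //; exact: connect_trans (connect1 HS) HB.
  + by exists X', A, B.
- move=> [X [A [B [hX HA HB ->]]]].
  apply: connect_trans (move1 A B hX) _.
  apply: connect_trans (connect_map (fun x y => @liftA1 x y B) HA) _.
  exact: (connect_map (@liftB1 A0) HB).
Qed.
End Sh5.


Lemma uniq_flatten_inj (T U : eqType) (s : seq T) (F : T -> seq U) : uniq s ->
  (forall x, x \in s -> uniq (F x)) ->
  (forall x y u, x \in s -> y \in s -> u \in F x -> u \in F y -> x = y) ->
  uniq (flatten (map F s)).
Proof.
elim: s => [|x s IH] //= /andP[Hx Hs] HF Hd.
rewrite cat_uniq HF ?mem_head //= IH //; last first.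
- by move=> a b u Ha Hb; apply: Hd; rewrite inE ?Ha ?Hb orbT.
- by move=> a Ha; apply: HF; rewrite inE Ha orbT.
rewrite andbT; apply/hasPn => u /flattenP [l /mapP [y Hy ->] Hu]; apply/negP => Hux.
have Exy : x = y by apply: (Hd x y u) => //; rewrite inE ?eqxx ?Hy ?orbT.
by move: Hx; rewrite Exy Hy.
Qed.

Section Sh6.
Variables k n1 n2 : nat.
Notation Mx n := 'M['I_k.+1]_n.
Notation n := (n1 + n2).
Notation sh := (@shuffle_mx k n1 n2).

Lemma memX (X : {set 'I_n}) (A : Mx n1) (B : Mx n2) (j : 'I_n) : colnz A -> #|X| = n1 ->
  (j \in X) = [exists r : 'I_n, (r < n1) && (sh X A B r j != ord0)].
Proof.
move=> cA hX; case: (boolP (j \in X)) => Hj; apply/esym.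
  have [r0 H0] := cA (Ordinal (sh_in_rk Hj hX)).
  apply/existsP; exists (lshift n2 r0); rewrite /= ltn_ord shE Hj /= ltn_ord.
  by rewrite -(mget_ord A) in H0.
apply/existsP => [[r /andP[Hr]]]; by rewrite shE (negbTE Hj) leqNgt Hr.
Qed.

Lemma sh_inj (X X' : {set 'I_n}) (A A' : Mx n1) (B B' : Mx n2) :
  colnz A -> colnz A' -> #|X| = n1 -> #|X'| = n1 ->
  sh X A B = sh X' A' B' -> [/\ X = X', A = A' & B = B'].
Proof.
move=> cA cA' hX hX' E.
have EX : X = X' by apply/setP => j; rewrite (memX B j cA hX) (memX B' j cA' hX') E.
subst X'; split => //.
  apply/matrixP => r c.
  have [j Hj Ej] : exists2 j : 'I_n, j \in X & rkn X j = c by apply: rkn_surj; rewrite hX ltn_ord.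
  have := congr1 (fun M : Mx n => M (lshift n2 r) j) E; rewrite /= !shE Hj /= ltn_ord Ej.
  by rewrite !mget_ord.
apply/matrixP => r c.
have hXc : #|~: X| = n2 by have := cardsC X; rewrite hX card_ord; lia.
have [j Hj Ej] : exists2 j : 'I_n, j \in ~: X & rkn (~: X) j = c by apply: rkn_surj; rewrite hXc ltn_ord.
have := congr1 (fun M : Mx n => M (rshift n1 r) j) E; rewrite inE in Hj.
rewrite /= !shE (negbTE Hj) /= leq_addr addKn Ej.
by rewrite !mget_ord.
Qed.

Definition LX := enum [set X : {set 'I_n} | #|X| == n1].

Lemma list_main (LA : seq (Mx n1)) (LB : seq (Mx n2)) (LN : seq (Mx n)) :
  uniq LA -> uniq LB -> uniq LN ->
  (forall A, A \in LA -> colnz A) -> (forall B, B \in LB -> colnz B) ->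
  (forall N, N \in LN <-> exists (X : {set 'I_n}) A B, [/\ #|X| = n1, A \in LA, B \in LB & N = sh X A B]) ->
  perm_eq (flatten [seq [seq sh X A B | X <- LX] | A <- LA, B <- LB]) LN.
Proof.
move=> uA uB uN cA cB HN.
have -> : [seq [seq sh X A B | X <- LX] | A <- LA, B <- LB] =
  map (fun p => [seq sh X p.1 p.2 | X <- LX]) [seq (A, B) | A <- LA, B <- LB].
  by rewrite map_allpairs.
apply: uniq_perm => //.
- apply: uniq_flatten_inj.
  + apply: allpairs_uniq => // [[a b]] [a' b'] _ _ /=; by case=> -> ->.
  + move=> [a b] /allpairsP [[a1 b1] [/= Ha Hb [-> ->]]].
    rewrite map_inj_in_uniq ?enum_uniq // => X X'; rewrite !mem_enum !inE => /eqP hX /eqP hX' E.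
    by have [] := sh_inj (cA _ Ha) (cA _ Ha) hX hX' E.
  + move=> [a b] [a' b'] u /allpairsP [[a1 b1] [/= Ha Hb [-> ->]]]
       /allpairsP [[a2 b2] [/= Ha' Hb' [-> ->]]].
    move=> /mapP [X HX ->] /mapP [X' HX' E].
    move: HX HX'; rewrite !mem_enum !inE => /eqP hX /eqP hX'.
    by have [_ -> ->] := sh_inj (cA _ Ha) (cA _ Ha') hX hX' E.
- move=> N; apply/idP/idP.
  + move/flattenP => [l /mapP [[a b] /allpairsP [[a1 b1] [/= Ha Hb [-> ->]]] ->]] /mapP [X HX ->].
    apply/HN; exists X, a1, b1; split => //.
    by move: HX; rewrite mem_enum inE => /eqP.
  + move/HN => [X [A [B [hX HA HB ->]]]].
    apply/flattenP; exists [seq sh X0 A B | X0 <- LX].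
      by apply/mapP; exists (A, B) => //; apply/allpairsP; exists (A, B).
    by apply/mapP; exists X => //; rewrite mem_enum inE hX.
Qed.
End Sh6.


Lemma lhs_eq k n1 n2 (LA : seq 'M['I_k.+1]_n1) (LB : seq 'M['I_k.+1]_n2) :
  flatten [seq [seq Tagged (fun n : nat => 'M['I_k.+1]_n) (shuffle_mx X x y)
               | X <- enum [set X : {set 'I_(n1 + n2)} | #|X| == n1]] | x <- LA, y <- LB]
  = map (Tagged (fun n : nat => 'M['I_k.+1]_n))
      (flatten [seq [seq shuffle_mx X x y | X <- LX n1 n2] | x <- LA, y <- LB]).
Proof.
transitivity (flatten (map (map (Tagged (fun n : nat => 'M['I_k.+1]_n)))
   [seq [seq shuffle_mx X x y | X <- LX n1 n2] | x <- LA, y <- LB])); last by rewrite [RHS]map_flatten.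
apply: f_equal; rewrite map_allpairs; apply: eq_allpairs => a b; by rewrite -map_comp.
Qed.

Lemma memT k m (x : 'M['I_k.+1]_m) : x \in enum 'M['I_k.+1]_m.
Proof. by rewrite mem_enum. Qed.

Lemma colnz_fwd k m (A0 A : 'M['I_k.+1]_m) : leM A0 A -> colnz A0 -> colnz A.
Proof. by move=> H; apply: (@connect_fwd _ _ (@colnz k m) _ _ _ H) => x y Hx Hxy; exact: colnz_step Hxy Hx. Qed.

Unset Implicit Arguments.
Theorem proposition2p3 (k : nat) (hk : 1 <= k) (M1 M2 : pmat k) :
  packed M1 -> packed M2 ->
  perm_eq (pm_mul (Eel M1) (Eel M2)) (Eel (ov M1 M2)) /\
  perm_eq (pm_mul (Hel M1) (Hel M2)) (Hel (un M1 M2)).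
Proof.
case: M1 => n1 A0; case: M2 => n2 B0.
rewrite /packed /packedb /= => /andP[_ /forallP cA0] /andP[_ /forallP cB0].
have {}cA0 : colnz A0 by move=> j; have /existsP := cA0 j.
have {}cB0 : colnz B0 by move=> j; have /existsP := cB0 j.
rewrite /pm_mul /Eel /Hel /ov /un /shc /=.
rewrite !allpairs_mapl !allpairs_mapr /= !lhs_eq.
split; apply: perm_map; apply: list_main; rewrite ?filter_uniq // -?enumT ?enum_uniq //.
- by move=> A; rewrite mem_filter => /andP[H _]; exact: colnz_fwd H cA0.
- by move=> B; rewrite mem_filter => /andP[H _]; exact: colnz_fwd H cB0.
- move=> N; rewrite mem_filter (memT N) andbT ov_sh; split.
    move/charE => [X [A [B [hX HA HB ->]]]]; exists X, A, B; split => //;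
      rewrite mem_filter; apply/andP; split => //; apply: memT.
  move=> [X [A [B [hX]]]]; rewrite !mem_filter => /andP[HA _] /andP[HB _] ->.
  by apply/charE; exists X, A, B.
- by move=> A; rewrite mem_filter => /andP[H _]; exact: colnz_bwd H cA0.
- by move=> B; rewrite mem_filter => /andP[H _]; exact: colnz_bwd H cB0.
- move=> N; rewrite mem_filter (memT N) andbT un_sh; split.
    move/(charH _ cA0 cB0) => [X [A [B [hX HA HB ->]]]]; exists X, A, B; split => //;
      rewrite mem_filter; apply/andP; split => //; apply: memT.
  move=> [X [A [B [hX]]]]; rewrite !mem_filter => /andP[HA _] /andP[HB _] ->.
  by apply/(charH _ cA0 cB0); exists X, A, B.
Qed.
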